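(* If $\mathcal{A}$ and $\mathcal{B}$ are leaktight probabilistic automata over the same alphabet with disjoint state sets, then their parallel composition $\mathcal{A}\,\|\,\mathcal{B}$ is leaktight.
   Context: Fix a finite alphabet $A$. A probabilistic automaton is $(Q,\delta_0,\Delta,F)$ with $Q$ finite, an initial distribution $\delta_0$ on $Q$ (a single initial state being the special case of a Dirac distribution), $F\subseteq Q$, $\Delta:Q\times A\to\mathcal{D}(Q)$. For $a\in A$ let $M_a(s,t)=\Delta(s,a)(t)$, for $u=a_0\cdots a_{n-1}$ let $M_u=M_{a_0}\cdots M_{a_{n-1}}$ (identity for the empty word), and $\mathbb{P}(s\xrightarrow{u}t)=M_u(s,t)$. A nonnegative $Q\times Q$ matrix $M$ is idempotent if $M(s,t)>0\iff M^2(s,t)>0$ for all $s,t$; a word $u$ is idempotent if $M_u$ is. A leak is a sequence $(u_n)$ of idempotent words such that $M_{u_n}$ converges to an idempotent matrix $M$ and there exist states $r,q$, both recurrent in the Markov chain with transition matrix $M$, with $\lim_n\mathbb{P}(r\xrightarrow{u_n}q)=0$ and $\mathbb{P}(r\xrightarrow{u_n}q)>0$ for all $n$; an automaton is leaktight if it has no leak (this depends only on $Q$ and $\Delta$). For $\mathcal{A}=(Q^{\mathcal{A}},q_0^{\mathcal{A}},\Delta^{\mathcal{A}},F^{\mathcal{A}})$ and $\mathcal{B}=(Q^{\mathcal{B}},q_0^{\mathcal{B}},\Delta^{\mathcal{B}},F^{\mathcal{B}})$ with $Q^{\mathcal{A}}\cap Q^{\mathcal{B}}=\emptyset$, the parallel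 composition is $\mathcal{A}\,\|\,\mathcal{B}=(Q^{\mathcal{A}}\uplus Q^{\mathcal{B}},\ \tfrac12 q_0^{\mathcal{A}}+\tfrac12 q_0^{\mathcal{B}},\ \Delta,\ F^{\mathcal{A}}\cup F^{\mathcal{B}})$ where $\Delta(q,a)=\Delta^{\mathcal{A}}(q,a)$ if $q\in Q^{\mathcal{A}}$ and $\Delta(q,a)=\Delta^{\mathcal{B}}(q,a)$ if $q\in Q^{\mathcal{B}}$. *)

(* Defs.v *)
From HB Require Import structures.
From mathcomp Require Import all_boot all_order all_algebra.
From mathcomp Require Import all_classical all_reals all_analysis.
Set Implicit Arguments. Unset Strict Implicit. Unset Printing Implicit Defensive.
Import Order.TTheory GRing.Theory Num.Theory.
Import numFieldNormedType.Exports.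
Local Open Scope classical_set_scope.
Local Open Scope ring_scope.

Section PA.
Variable R : realType.

(* Nonnegative Q x Q matrices are represented as functions Q -> Q -> R. *)
Definition mx (Q : finType) := Q -> Q -> R.

Definition is_distr (Q : finType) (d : Q -> R) : Prop :=
  (forall q, 0 <= d q) /\ \sum_(q : Q) d q = 1.

Definition pt_distr (Q : finType) (q0 : Q) : Q -> R :=
  fun q => if q == q0 then 1 else 0.

Record PA (A Q : finType) := MkPA {
  pa_init  : Q -> R;
  pa_trans : Q -> A -> Q -> R;   (* pa_trans s a t = Delta(s,a)(t) *)
  pa_final : {set Q} }.

Definition is_PA (A Q : finType) (P : PA A Q) : Prop :=
  is_distr (pa_init P) /\ forall s a, is_distr (pa_trans P s a).

Definition mxmul (Q : finType) (M N : mx Q) : mx Q :=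
  fun s t => \sum_(r : Q) M s r * N r t.

Definition mxid (Q : finType) : mx Q := fun s t => if s == t then 1 else 0.

Definition Mletter (A Q : finType) (P : PA A Q) (a : A) : mx Q :=
  fun s t => pa_trans P s a t.

(* M_u = M_{a_0} ... M_{a_{n-1}}, identity for the empty word;
   prob P s u t = P(s -u-> t) = M_u(s,t). *)
Definition Mword (A Q : finType) (P : PA A Q) (u : seq A) : mx Q :=
  foldr (fun a N => mxmul (Mletter P a) N) (@mxid Q) u.

Definition idempotent (Q : finType) (M : mx Q) : Prop :=
  forall s t, 0 < M s t <-> 0 < mxmul M M s t.

Definition accessible (Q : finType) (M : mx Q) (s t : Q) : bool :=
  connect (fun x y => 0 < M x y) s t.

Definition recurrent (Q : finType) (M : mx Q) (s : Q) : Prop :=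
  forall t, accessible M s t -> accessible M t s.

Definition is_leak (A Q : finType) (P : PA A Q) (u : nat -> seq A) : Prop :=
  (forall n, idempotent (Mword P (u n))) /\
  exists M : mx Q,
    (forall s t, (fun n => Mword P (u n) s t) @ \oo --> M s t) /\
    idempotent M /\
    exists r q : Q, recurrent M r /\ recurrent M q /\
      (fun n => Mword P (u n) r q) @ \oo --> (0 : R) /\
      (forall n, 0 < Mword P (u n) r q).

Definition leaktight (A Q : finType) (P : PA A Q) : Prop :=
  forall u : nat -> seq A, ~ is_leak P u.

(* Parallel composition; the disjoint union of the state sets is the sum type. *)
Definition par (A Q1 Q2 : finType) (P1 : PA A Q1) (P2 : PA A Q2) : PA A (Q1 + Q2)%type :=
  {| pa_init := fun x => match x with
                         | inl q => 2^-1 * pa_init P1 q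
                         | inr q => 2^-1 * pa_init P2 q end;
     pa_trans := fun x a y => match x, y with
                         | inl s, inl t => pa_trans P1 s a t
                         | inr s, inr t => pa_trans P2 s a t
                         | _, _ => 0 end;
     pa_final := [set x | match x with
                          | inl q => q \in pa_final P1
                          | inr q => q \in pa_final P2 end] |}.

End PA.

(* Main.v *)
Require Import Defs.
From HB Require Import structures.
From mathcomp Require Import all_boot all_order all_algebra.
From mathcomp Require Import all_classical all_reals all_analysis.
Import Order.TTheory GRing.Theory Num.Theory.
Import numFieldNormedType.Exports.
Local Open Scope classical_set_scope.
Local Open Scope ring_scope.

Lemma sum_split (R : realType) (Q1 Q2 : finType) (F : Q1 + Q2 -> R) :
  \sum_(r : Q1 + Q2) F r = \sum_(r : Q1) F (inl r) + \sum_(r : Q2) F (inr r).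
Proof. by rewrite big_sumType. Qed.

Lemma Mword_par (R : realType) (A Q1 Q2 : finType) (P1 : PA R A Q1) (P2 : PA R A Q2) w :
  (forall s t, Mword (par P1 P2) w (inl s) (inl t) = Mword P1 w s t) /\
  (forall s t, Mword (par P1 P2) w (inr s) (inr t) = Mword P2 w s t) /\
  (forall s t, Mword (par P1 P2) w (inl s) (inr t) = 0) /\
  (forall s t, Mword (par P1 P2) w (inr s) (inl t) = 0).
Proof.
elim: w => [|a w [H1 [H2 [H3 H4]]]].
  rewrite /Mword /mxid /=; split; [|split; [|split]] => s t //.
rewrite /Mword /= -/(Mword _ w) -/(Mword (par P1 P2) w).
rewrite /mxmul /Mletter /=; split; [|split; [|split]] => s t; rewrite sum_split.
- rewrite [X in _ + X]big1 ?addr0; last by move=> i _; rewrite mul0r.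
  by apply: eq_bigr => r _; rewrite H1.
- rewrite [X in X + _]big1 ?add0r; last by move=> i _; rewrite mul0r.
  by apply: eq_bigr => r _; rewrite H2.
- rewrite !big1 ?addr0 // => i _; by rewrite ?H3 ?mul0r ?mulr0.
- rewrite !big1 ?addr0 // => i _; by rewrite ?H4 ?mul0r ?mulr0.
Qed.
Section Gen.
Variables (R : realType) (T T' : finType) (h : T' -> T) (M : mx R T) (M' : mx R T').
Hypothesis hM : forall s t, M' s t = M (h s) (h t).
Hypothesis hinj : injective h.
Hypothesis hcod : forall x y, 0 < M (h x) y -> exists y', y = h y'.

Lemma acc_fwd x y : accessible M' x y -> accessible M (h x) (h y).
Proof.
move=> /connectP [p]; elim: p x => [|z p IH] x /=.
  by move=> _ ->; exact: connect0.
move=> /andP [e pp] ly; apply: connect_trans (IH z pp ly).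
by apply: connect1; rewrite -hM.
Qed.

Lemma acc_bwd x y : accessible M (h x) (h y) -> accessible M' x y.
Proof.
move=> /connectP [p]; elim: p x => [|z p IH] x /=.
  by move=> _ /hinj ->; exact: connect0.
move=> /andP [e pp] ly; have [z' ez] := hcod _ _ e; subst z.
apply: connect_trans (IH z' pp ly).
by apply: connect1; rewrite /= hM.
Qed.

Lemma rec_restr r : recurrent M (h r) -> recurrent M' r.
Proof. by move=> Hr t /acc_fwd /Hr /acc_bwd. Qed.

Hypothesis hsum : forall s t, mxmul M M (h s) (h t) = mxmul M' M' s t.

Lemma idem_restr : Defs.idempotent M -> Defs.idempotent M'.
Proof. by move=> HM s t; rewrite -hsum !hM; exact: HM. Qed.
End Gen.

Section Block.
Variables (R : realType) (Q1 Q2 : finType) (N : mx R (Q1 + Q2)%type).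
Hypothesis N12 : forall s t, N (inl s) (inr t) = 0.
Hypothesis N21 : forall s t, N (inr s) (inl t) = 0.

Lemma blk_sum_l s t :
  mxmul N N (inl s) (inl t) = mxmul (fun x y => N (inl x) (inl y)) (fun x y => N (inl x) (inl y)) s t.
Proof.
rewrite /mxmul sum_split [X in _ + X]big1 ?addr0 // => i _.
by rewrite N12 mul0r.
Qed.

Lemma blk_sum_r s t :
  mxmul N N (inr s) (inr t) = mxmul (fun x y => N (inr x) (inr y)) (fun x y => N (inr x) (inr y)) s t.
Proof.
rewrite /mxmul sum_split [X in X + _]big1 ?add0r // => i _.
by rewrite N21 mul0r.
Qed.

Lemma blk_cod_l x y : 0 < N (inl x) y -> exists y', y = inl y'.
Proof. by case: y => [y|y]; [exists y | rewrite N12 ltxx]. Qed.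

Lemma blk_cod_r x y : 0 < N (inr x) y -> exists y', y = inr y'.
Proof. by case: y => [y|y]; [rewrite N21 ltxx | exists y]. Qed.
End Block.

Lemma cvg0_eq (R : realType) (f : nat -> R) (l : R) :
  (forall n, f n = 0) -> f @ \oo --> l -> l = 0.
Proof.
move=> f0 H.
have E : f = fun _ => 0 by apply: funext.
rewrite E in H.
exact: (cvg_unique _ H (cvg_cst 0)).
Qed.

Theorem proposition4p4 (R : realType) (A QA QB : finType)
    (PA_ : PA R A QA) (PB : PA R A QB) (qA : QA) (qB : QB) :
  is_PA PA_ -> is_PA PB ->
  pa_init PA_ = pt_distr R qA -> pa_init PB = pt_distr R qB ->
  leaktight PA_ -> leaktight PB ->
  leaktight (par PA_ PB).
Proof.
move=> _ _ _ _ LA LB u [Hid [M [Hcv [HMid [r [q [Hr [Hq [H0 Hpos]]]]]]]]].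
have W := fun n : nat => @Mword_par R A QA QB PA_ PB (u n).
have M12 : forall s t, M (inl s) (inr t) = 0.
  move=> s t; apply: (@cvg0_eq R (fun n => Mword (par PA_ PB) (u n) (inl s) (inr t))); last exact: Hcv; move=> n.
  by case: (W n) => _ [_ [H _]].
have M21 : forall s t, M (inr s) (inl t) = 0.
  move=> s t; apply: (@cvg0_eq R (fun n => Mword (par PA_ PB) (u n) (inr s) (inl t))); last exact: Hcv; move=> n.
  by case: (W n) => _ [_ [_ H]].
case: r q Hr Hq H0 Hpos => [r|r] [q|q] Hr Hq H0 Hpos.
- apply: (LA u); split.
    move=> n; case: (W n) => [W1 [W2 [W3 W4]]].
    apply: (@idem_restr R _ _ inl (Mword (par PA_ PB) (u n))) => //.
    by move=> s t; rewrite blk_sum_l //; apply: eq_bigr => i _; rewrite !W1.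
  exists (fun s t => M (inl s) (inl t)); split.
    move=> s t; have E : (fun n => Mword PA_ (u n) s t) = (fun n => Mword (par PA_ PB) (u n) (inl s) (inl t)).
      by apply: funext => n; case: (W n) => [-> _].
    by rewrite E.
  split.
    by apply: (@idem_restr R _ _ inl M) => // s t; rewrite blk_sum_l.
  exists r, q; split.
    apply: (@rec_restr R _ _ inl M) => //; first exact: inl_inj.
    exact: blk_cod_l.
  split.
    apply: (@rec_restr R _ _ inl M) => //; first exact: inl_inj.
    exact: blk_cod_l.
  split.
    have E : (fun n => Mword PA_ (u n) r q) = (fun n => Mword (par PA_ PB) (u n) (inl r) (inl q)).
      by apply: funext => n; case: (W n) => [-> _].
    by rewrite E.
  by move=> n; case: (W n) => [<- _].
- by have := Hpos 0%N; case: (W 0%N) => _ [_ [-> _]]; rewrite ltxx.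
- by have := Hpos 0%N; case: (W 0%N) => _ [_ [_ ->]]; rewrite ltxx.
- apply: (LB u); split.
    move=> n; case: (W n) => [W1 [W2 [W3 W4]]].
    apply: (@idem_restr R _ _ inr (Mword (par PA_ PB) (u n))) => //.
    by move=> s t; rewrite blk_sum_r //; apply: eq_bigr => i _; rewrite !W2.
  exists (fun s t => M (inr s) (inr t)); split.
    move=> s t; have E : (fun n => Mword PB (u n) s t) = (fun n => Mword (par PA_ PB) (u n) (inr s) (inr t)).
      by apply: funext => n; case: (W n) => [_ [-> _]].
    by rewrite E.
  split.
    by apply: (@idem_restr R _ _ inr M) => // s t; rewrite blk_sum_r.
  exists r, q; split.
    apply: (@rec_restr R _ _ inr M) => //; first exact: inr_inj.
    exact: blk_cod_r.
  split.
    apply: (@rec_restr R _ _ inr M) => //; first exact: inr_inj.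
    exact: blk_cod_r.
  split.
    have E : (fun n => Mword PB (u n) r q) = (fun n => Mword (par PA_ PB) (u n) (inr r) (inr q)).
      by apply: funext => n; case: (W n) => [_ [-> _]].
    by rewrite E.
  by move=> n; case: (W n) => [_ [<- _]].
Qed.
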